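(* Let $n\ge3$ and $q\ge2$ with $q-1\le\lfloor n/2\rfloor$, and let $m_1<\cdots<m_t$ be the minimal monomial generators of $I(C_n)^{[q-1]}$, listed in the order described in the context. Then for all $j<i$, either $(m_j:m_i)\subseteq (I(C_n)^{[q]}:m_i)$, or there exists $r<i$ such that $(m_r:m_i)$ is generated by a single variable and $(m_j:m_i)\subseteq (m_r:m_i)$.
   Context: $C_n$ is the cycle on $x_1,\dots,x_n$ with edges $\{x_i,x_{i+1}\}$ ($1\le i\le n-1$) and $\{x_1,x_n\}$; $I(C_n)$ is its edge ideal in $\mathbb{K}[x_1,\dots,x_n]$, and $I(C_n)^{[q]}$ is the ideal generated by the monomials $\prod_{v\in e_1\cup\dots\cup e_q}v$ for matchings $\{e_1,\dots,e_q\}$ of $C_n$ (zero if no such matching exists). For monomial ideals/monomials, $(I:f)=\{g: gf\in I\}$. Ordering: edges are ordered $\{x_1,x_2\}<\{x_2,x_3\}<\cdots<\{x_{n-1},x_n\}<\{x_1,x_n\}$. For a matching $M$ of size $q-1$, let $e(M)$ be the sequence of its edges in increasing order; matchings are compared by the lexicographic order on these sequences. Each minimal generator $m$ of $I(C_n)^{[q-1]}$ is associated with the lexicographically smallest matching $M$ whose product of covered vertices is $m$, and generators are ordered by the lexicographic order of the associated sequences $e(M)$. *)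

(* Defs.v *)
(* Squarefree monomial ideals of K[x_1..x_n] are represented
   by the set of monomials they contain (exponent vectors 'I_n -> nat);
   vertex x_(k+1) is the index k : 'I_n. *)
From mathcomp Require Import all_boot.
Set Implicit Arguments. Unset Strict Implicit. Unset Printing Implicit Defensive.

Definition mon (n : nat) := {ffun 'I_n -> nat}.

Definition mmul n (u v : mon n) : mon n := [ffun k => u k + v k].
Definition mdvd n (u v : mon n) : bool := [forall k, u k <= v k].
Definition mvar n (k : 'I_n) : mon n := [ffun j => nat_of_bool (j == k)].

Definition mset n := mon n -> Prop.
Definition gen_ideal n (G : mset n) : mset n :=
  fun u => exists2 g, G g & mdvd g u.
Definition principal n (f : mon n) : mset n := gen_ideal (fun g => g = f).
Definition colon n (J : mset n) (f : mon n) : mset n := fun u => J (mmul u f).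
Definition msubset n (A B : mset n) : Prop := forall u, A u -> B u.
Definition min_gens n (G : mset n) : mset n :=
  fun g => G g /\ forall g', G g' -> mdvd g' g -> g' = g.

(* The cycle C_n: edge i (i = 0..n-1) is {x_(i+1), x_(i+2)}, and edge n-1 is
   {x_n, x_1}; the edge order is the order of the indices i. *)
Definition edge n (i : 'I_n) : {set 'I_n} :=
  [set j : 'I_n | (val j == val i) || (val j == (val i).+1 %% n)].
Definition is_matching n (M : {set 'I_n}) : bool :=
  [forall i in M, forall j in M, (i != j) ==> [disjoint edge i & edge j]].
Definition cover n (M : {set 'I_n}) : {set 'I_n} := \bigcup_(i in M) edge i.
Definition mono n (M : {set 'I_n}) : mon n := [ffun k => nat_of_bool (k \in cover M)].

Definition matching_gens (n q : nat) : mset n :=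
  fun u => exists M : {set 'I_n}, [/\ is_matching M, #|M| = q & u = mono M].
Arguments matching_gens : clear implicits.
Definition Iq (n q : nat) : mset n := gen_ideal (matching_gens n q).
Arguments Iq : clear implicits.

Definition eseq n (M : {set 'I_n}) : seq nat := sort leq (map val (enum M)).
Fixpoint lex_lt (s t : seq nat) : bool :=
  match s, t with
  | [::], [::] => false
  | [::], _ :: _ => true
  | _ :: _, [::] => false
  | a :: s', b :: t' => (a < b) || ((a == b) && lex_lt s' t')
  end.
Definition lex_le s t := (s == t) || lex_lt s t.

Definition lexmin_rep (n p : nat) (m : mon n) (M : {set 'I_n}) : Prop :=
  [/\ is_matching M, #|M| = p, mono M = m &
      forall M' : {set 'I_n}, is_matching M' -> #|M'| = p -> mono M' = m ->
        lex_le (eseq M) (eseq M')].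

Arguments lexmin_rep : clear implicits.

Definition gen_lt (n p : nat) (m m' : mon n) : Prop :=
  exists M M', [/\ lexmin_rep n p m M, lexmin_rep n p m' M' & lex_lt (eseq M) (eseq M')].
Arguments gen_lt : clear implicits.

(* Main.v *)
Require Import Defs.
From mathcomp Require Import all_boot zify.
Import Defs.
Set Implicit Arguments. Unset Strict Implicit. Unset Printing Implicit Defensive.

Lemma succ_mod n (i : nat) : i < n -> i.+1 %% n = if i.+1 == n then 0 else i.+1.
Proof. move=> lt; case: eqP => [->|ne]; first by rewrite modnn. rewrite modn_small //; lia. Qed.

Lemma val_ordS n (i : 'I_n) : nat_of_ord (ordS i) = if (nat_of_ord i).+1 == n then 0 else (nat_of_ord i).+1.
Proof. by rewrite /= succ_mod. Qed.

Lemma in_edge n (i v : 'I_n) : (v \in edge i) = (v == i) || (v == ordS i).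
Proof. by rewrite inE. Qed.

Lemma val_edge n (i v : 'I_n) : v \in edge i ->
  nat_of_ord v = i \/ ((nat_of_ord i).+1 < n /\ nat_of_ord v = i.+1) \/ ((nat_of_ord i).+1 = n /\ nat_of_ord v = 0).
Proof.
rewrite in_edge => /orP[/eqP->|/eqP->]; first by left.
rewrite val_ordS; case: eqP => H; right; [right|left]; split => //.
have := ltn_ord i; lia.
Qed.

Lemma ordS_neq n (i : 'I_n) : 2 <= n -> ordS i != i.
Proof.
move=> n2; apply/eqP => /(congr1 (@nat_of_ord n)); rewrite val_ordS; case: eqP => H; lia.
Qed.

Lemma matchingP n (M : {set 'I_n}) : is_matching M ->
  forall i j v, i \in M -> j \in M -> v \in edge i -> v \in edge j -> i = j.
Proof.
move=> /forallP H i j v iM jM vi vj. have := H i. rewrite iM /= => /forallP/(_ j).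
rewrite jM /=; case: eqP => // ne /disjointFr/(_ vi). by rewrite vj.
Qed.

Lemma matching_of n (M : {set 'I_n}) :
  (forall i j v, i \in M -> j \in M -> v \in edge i -> v \in edge j -> i = j) -> is_matching M.
Proof.
move=> H; apply/forallP => i; apply/implyP => iM; apply/forallP => j; apply/implyP => jM.
apply/implyP => ne; rewrite disjoint_subset; apply/subsetP => v vi; rewrite inE; apply/negP => vj.
by move/eqP: ne; apply; apply: (H i j v).
Qed.

Lemma no_adj n (M : {set 'I_n}) i : 2 <= n -> is_matching M -> i \in M -> ordS i \in M -> False.
Proof.
move=> n2 mM iM sM. have e := matchingP mM iM sM (v := ordS i).
have /eqP := ordS_neq i n2; apply; symmetry; apply: e; rewrite in_edge eqxx ?orbT //.
Qed.

Lemma in_cover n (M : {set 'I_n}) v : reflect (exists2 i, i \in M & v \in edge i) (v \in cover M).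
Proof. exact: bigcupP. Qed.

Lemma edge_cover n (M : {set 'I_n}) i v : i \in M -> v \in edge i -> v \in cover M.
Proof. by move=> iM vi; apply/in_cover; exists i. Qed.

Lemma cover_eq n (M : {set 'I_n}) : cover M = M :|: [set ordS i | i in M].
Proof.
apply/setP=> v; rewrite inE; apply/in_cover/orP.
- case=> i iM; rewrite in_edge => /orP[/eqP->|/eqP->]; [left => //|right; apply: imset_f => //].
- case=> [vM|/imsetP[i iM ->]]; [exists v => //| exists i => //]; rewrite in_edge eqxx ?orbT //.
Qed.

Lemma card_cover n (M : {set 'I_n}) : 3 <= n -> is_matching M -> #|cover M| = 2 * #|M|.
Proof.
move=> n3 mM; rewrite cover_eq cardsU card_imset; last exact: ordS_inj.
suff -> : M :&: [set ordS i | i in M] = set0 by rewrite cards0 subn0 addnn -mul2n.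
apply/setP => v; rewrite !inE; apply/negP => /andP[vM /imsetP[i iM E]].
subst v; exact: (no_adj (ltnW n3) mM iM vM).
Qed.

Lemma mono_cover n (M1 M2 : {set 'I_n}) : mdvd (mono M1) (mono M2) -> cover M1 \subset cover M2.
Proof.
move=> /forallP H; apply/subsetP => v vi; have := H v; rewrite !ffunE vi.
by case: (v \in cover M2).
Qed.

Lemma mono_inj n (M1 M2 : {set 'I_n}) : mono M1 = mono M2 -> cover M1 = cover M2.
Proof.
move=> E; apply/setP => v; have := congr1 (fun f : mon n => f v) E; rewrite !ffunE.
by do 2 case: (_ \in _).
Qed.

Lemma lex_lt_irr s : lex_lt s s = false.
Proof. by elim: s => //= a s ->; rewrite ltnn eqxx. Qed.

Lemma lex_lt_trans s t u : lex_lt s t -> lex_lt t u -> lex_lt s u.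
Proof.
elim: s t u => [|a s IH] [|b t] [|c u] //=.
case/orP => [ab|/andP[/eqP<- st]]; case/orP => [bc|/andP[/eqP<- tu]].
- by rewrite (ltn_trans ab bc).
- by rewrite ab.
- by rewrite bc.
- by rewrite eqxx (IH _ _ st tu) orbT.
Qed.

Lemma lex_le_lt s t u : lex_le s t -> lex_lt t u -> lex_lt s u.
Proof. by case/orP => [/eqP->//|]; apply: lex_lt_trans. Qed.

Lemma lex_lt_le_false s t : lex_lt s t -> lex_le t s -> False.
Proof. by move=> st /lex_le_lt /(_ st); rewrite lex_lt_irr. Qed.

Lemma lex_total s t : size s = size t -> lex_le s t || lex_lt t s.
Proof.
rewrite /lex_le; elim: s t => [|a s IH] [|b t] //= [] /IH H.
case: (ltngtP a b) => [ab|ba|eab] /=.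
- by rewrite !orbT.
- by rewrite !orbT.
- subst b; rewrite eqseq_cons eqxx /=; by [].
Qed.

Lemma lex_first s t : sorted ltn s -> sorted ltn t -> size s = size t -> lex_lt s t ->
  exists b, [/\ b \in s, b \notin t, (forall c, c < b -> (c \in s) = (c \in t)) &
     exists2 a, a \in t & b < a].
Proof.
elim: s t => [|x s IH] [|y t] //= ps pt [] sz.
have ms := order_path_min ltn_trans ps; have mt := order_path_min ltn_trans pt.
case/orP => [xy|/andP[/eqP exy st]].
- exists x; split.
  + by rewrite inE eqxx.
  + rewrite inE negb_or; apply/andP; split; first by rewrite neq_ltn xy.
    apply/negP => xt; move/allP: mt => /(_ x xt); lia.
  + move=> c cx; rewrite !inE.
    have -> : (c == x) = false by apply/eqP; lia.
    have -> : (c == y) = false by apply/eqP; lia.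
    case E1: (c \in s); first by move/allP: ms => /(_ c E1); lia.
    case E2: (c \in t) => //; by move/allP: mt => /(_ c E2); lia.
  + by exists y; rewrite ?inE ?eqxx.
- subst y.
  have [b [bs bt bc [a aT ba]]] := IH t (path_sorted ps) (path_sorted pt) sz st.
  have xb : x < b by move/allP: ms => /(_ b bs).
  exists b; split.
  + by rewrite inE bs orbT.
  + rewrite inE negb_or bt andbT; apply/eqP; lia.
  + move=> c cb; rewrite !inE; case: (c == x) => //=; exact: bc.
  + by exists a; rewrite ?inE ?aT ?orbT.
Qed.

Lemma lex_of_first s t b : sorted ltn s -> sorted ltn t -> b \in s -> b \notin t ->
  (forall c, c < b -> (c \in s) = (c \in t)) -> (exists2 a, a \in t & b < a) -> lex_lt s t.
Proof.
elim: s t => [|x s IH] [|y t] //= ps pt bs bt bc [a aT ba] //.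
have ms := order_path_min ltn_trans ps; have mt := order_path_min ltn_trans pt.
case: (ltngtP x y) => [//|yx|exy] /=.
- exfalso. have xb : x <= b.
    move: bs; rewrite inE => /orP[/eqP->//|bs]; move/allP: ms => /(_ b bs); lia.
  have := bc y (leq_trans yx xb); rewrite !inE eqxx /= => H.
  have {H} : (y == x) || (y \in s) by rewrite H.
  case/orP => [/eqP|ys]; first lia.
  move/allP: ms => /(_ y ys); lia.
- subst y; 
  have bx : b != x by apply/eqP => E; move: bt; rewrite inE E eqxx.
  move: bs; rewrite inE (negbTE bx) /= => bs.
  have xb : x < b by move/allP: ms => /(_ b bs).
  apply: (IH t (path_sorted ps) (path_sorted pt) bs).
  + by move: bt; rewrite inE negb_or => /andP[].
  + move=> c cb; have := bc c cb; rewrite !inE; case: eqP => [->|_] /= H; last exact: H.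
    case E1: (x \in s); first by move/allP: ms => /(_ x E1); lia.
    case E2: (x \in t) => //; by move/allP: mt => /(_ x E2); lia.
  + exists a => //. move: aT; rewrite inE => /orP[/eqP E|//]; lia.
Qed.

Lemma eseq_sorted n (M : {set 'I_n}) : sorted ltn (eseq M).
Proof.
rewrite /eseq ltn_sorted_uniq_leq. rewrite sort_uniq. rewrite (sort_sorted leq_total). rewrite andbT.
by rewrite map_inj_uniq ?enum_uniq //; exact: val_inj.
Qed.

Lemma mem_eseq n (M : {set 'I_n}) (i : 'I_n) : (nat_of_ord i \in eseq M) = (i \in M).
Proof. by rewrite mem_sort (mem_map val_inj) mem_enum. Qed.

Lemma eseq_lt n (M : {set 'I_n}) x : x \in eseq M -> x < n.
Proof. by rewrite mem_sort => /mapP[i _ ->]; exact: ltn_ord. Qed.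

Lemma size_eseq n (M : {set 'I_n}) : size (eseq M) = #|M|.
Proof. by rewrite size_sort size_map -cardE. Qed.

Lemma lex_first_ord n (M1 M2 : {set 'I_n}) : #|M1| = #|M2| -> lex_lt (eseq M1) (eseq M2) ->
  exists b : 'I_n, [/\ b \in M1, b \notin M2,
     (forall c : 'I_n, c < b -> (c \in M1) = (c \in M2)) & exists2 a : 'I_n, a \in M2 & b < a].
Proof.
move=> sz lt.
have [b [bs bt bc [a aT ba]]] := lex_first (eseq_sorted M1) (eseq_sorted M2)
   (ltac:(by rewrite !size_eseq)) lt.
have bn := eseq_lt bs; have an := eseq_lt aT.
exists (Ordinal bn); split.
- by rewrite -mem_eseq.
- by rewrite -mem_eseq.
- by move=> c cb; rewrite -!mem_eseq; apply: bc.
- by exists (Ordinal an) => //; rewrite -mem_eseq.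
Qed.

Lemma lex_of_first_ord n (M1 M2 : {set 'I_n}) (b : 'I_n) : b \in M1 -> b \notin M2 ->
  (forall c : 'I_n, c < b -> (c \in M1) = (c \in M2)) -> (exists2 a : 'I_n, a \in M2 & b < a) ->
  lex_lt (eseq M1) (eseq M2).
Proof.
move=> bs bt bc [a aT ba].
apply: (lex_of_first (b := nat_of_ord b) (eseq_sorted M1) (eseq_sorted M2)).
- by rewrite mem_eseq.
- by rewrite mem_eseq.
- move=> c cb; have cn : c < n by apply: ltn_trans cb (ltn_ord b).
  by rewrite -[c]/(nat_of_ord (Ordinal cn)) !mem_eseq; apply: bc.
- by exists (nat_of_ord a); rewrite ?mem_eseq.
Qed.

Lemma lexmin_exists n p (M : {set 'I_n}) : is_matching M -> #|M| = p ->
  exists M', lexmin_rep n p (mono M) M' /\ lex_le (eseq M') (eseq M).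
Proof.
move=> mM sM.
pose P (X : {set 'I_n}) := [&& is_matching X, (#|X| == p) & (mono X == mono M)].
pose S (X : {set 'I_n}) := [set Y | P Y && lex_lt (eseq Y) (eseq X)].
have szP X : P X -> size (eseq X) = p by case/and3P => _ /eqP <- _; rewrite size_eseq.
suff H : forall k X, P X -> #|S X| <= k -> exists Y, [/\ P Y,
   (forall Z, P Z -> lex_le (eseq Y) (eseq Z)) & lex_le (eseq Y) (eseq X)].
  have [|Y [/and3P[mY /eqP sY /eqP eY] HY YM]] := H _ M _ (leqnn _).
    by rewrite /P mM sM !eqxx.
  exists Y; split => //; split => // Z mZ sZ eZ; apply: HY; by rewrite /P mZ sZ eZ !eqxx.
elim=> [|k IH] X PX cX.
all: case: (boolP [forall Z, P Z ==> lex_le (eseq X) (eseq Z)]) => [/forallP HX|].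
1,3: exists X; split => //; last by rewrite /lex_le eqxx.
1,2: by move=> Z PZ; have := HX Z; rewrite PZ.
all: rewrite negb_forall => /existsP[Z]; rewrite negb_imply => /andP[PZ nle].
all: have ZX : lex_lt (eseq Z) (eseq X).
1,3: have := @lex_total (eseq X) (eseq Z); rewrite (szP _ PX) (szP _ PZ) (negbTE nle); exact.
all: have ZS : Z \in S X by rewrite inE PZ ZX.
- by move: cX; rewrite leqn0 => /eqP/cards0_eq SX; rewrite SX inE in ZS.
have pr : S Z \proper S X.
  apply/properP; split.
  + apply/subsetP => Y; rewrite !inE => /andP[PY YZ]; rewrite PY /=; exact: lex_lt_trans YZ ZX.
  + by exists Z => //; rewrite inE lex_lt_irr andbF.
have [Y [PY HY YZ]] := IH Z PZ (ltnSE (leq_trans (proper_card pr) cX)).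
exists Y; split => //; apply/orP; right; apply: lex_le_lt YZ ZX.
Qed.

Lemma colon_princ n (m f u : mon n) : colon (principal m) f u <-> forall k, m k <= u k + f k.
Proof.
rewrite /colon /principal /gen_ideal; split.
- case=> g -> /forallP H k; have := H k; by rewrite ffunE.
- move=> H; exists m => //; apply/forallP => k; rewrite ffunE; exact: H.
Qed.

Lemma matching_add n (M : {set 'I_n}) b : is_matching M ->
  (forall v, v \in edge b -> v \notin cover M) -> is_matching (b |: M).
Proof.
move=> mM H; apply: matching_of => i j v; rewrite !in_setU1.
case/orP => [/eqP->|iM]; case/orP => [/eqP->|jM] vi vj //.
- by move: (H v vi); rewrite (edge_cover jM vj).
- by move: (H v vj); rewrite (edge_cover iM vi).
- exact: (matchingP mM iM jM vi vj).
Qed.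

Lemma matching_sub n (M M' : {set 'I_n}) : is_matching M -> M' \subset M -> is_matching M'.
Proof.
move=> mM /subsetP s; apply: matching_of => i j v iM jM; exact: (matchingP mM (s _ iM) (s _ jM)).
Qed.

Lemma concl1 n q (Mi Mj : {set 'I_n}) (b : 'I_n) : is_matching Mi -> #|Mi| = q.-1 -> 2 <= q ->
  b \in Mj -> b \notin cover Mi -> ordS b \notin cover Mi ->
  msubset (colon (principal (mono Mj)) (mono Mi)) (colon (Iq n q) (mono Mi)).
Proof.
move=> mM sM q2 bj b1 b2 u /colon_princ H.
have bM : b \notin Mi by apply: contra b1 => bM; apply: (edge_cover bM); rewrite in_edge eqxx.
exists (mono (b |: Mi)).
- exists (b |: Mi); split => //.
  + apply: matching_add => // v; rewrite in_edge => /orP[/eqP->|/eqP->] //.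
  + rewrite cardsU1 bM sM; lia.
- apply/forallP => k; rewrite !ffunE.
  case kA: (k \in cover Mi); first by case: (_ \in cover _) => /=; lia.
  case kc: (k \in cover (b |: Mi)) => //=.
  have kb : k \in edge b.
    case/in_cover: kc => i; rewrite in_setU1 => /orP[/eqP->//|iM] ki.
    by rewrite (edge_cover iM ki) in kA.
  have := H k; rewrite !ffunE kA (edge_cover bj kb) /=; lia.
Qed.

Lemma min_gens_mono n p (M : {set 'I_n}) : 3 <= n -> is_matching M -> #|M| = p ->
  min_gens (matching_gens n p) (mono M).
Proof.
move=> n3 mM sM; split; first by exists M.
move=> g' [M' [mM' sM' ->]] /mono_cover sub.
have E : cover M' = cover M.
  apply/eqP; rewrite eqEcard sub card_cover // card_cover // sM sM' leqnn //.
by apply/ffunP => v; rewrite !ffunE E.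
Qed.

Lemma concl2 n p (Mi Mj Mr : {set 'I_n}) (k : 'I_n) : 3 <= n ->
  is_matching Mr -> #|Mr| = p -> lexmin_rep n p (mono Mi) Mi ->
  (forall v, v \in cover Mr -> (v \in cover Mi) || (v == k)) -> k \in cover Mr ->
  k \in cover Mj -> k \notin cover Mi ->
  lex_lt (eseq Mr) (eseq Mi) ->
  exists mr : mon n, [/\ min_gens (matching_gens n p) mr, gen_lt n p mr (mono Mi),
          (exists k : 'I_n, forall u, colon (principal mr) (mono Mi) u <-> principal (mvar k) u) &
          msubset (colon (principal (mono Mj)) (mono Mi)) (colon (principal mr) (mono Mi))].
Proof.
move=> n3 mr sr lexi sub kr kj ki lt.
have key : forall u, colon (principal (mono Mr)) (mono Mi) u <-> 0 < u k.
  move=> u; rewrite colon_princ; split.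
  - by move/(_ k); rewrite !ffunE kr (negbTE ki) addn0.
  - move=> uk v; rewrite !ffunE; case vr: (v \in cover Mr) => //=.
    case/orP: (sub v vr) => [->|/eqP->]; first lia.
    rewrite (negbTE ki); lia.
exists (mono Mr); split.
- exact: min_gens_mono.
- have [Mr' [lr le]] := lexmin_exists mr sr.
  exists Mr', Mi; split => //; exact: lex_le_lt le lt.
- exists k => u; rewrite key /principal /gen_ideal; split.
  + move=> uk; exists (mvar k) => //; apply/forallP => v; rewrite ffunE.
    by case: eqP => [->|].
  + by case=> g -> /forallP/(_ k); rewrite ffunE eqxx.
- move=> u /colon_princ H; apply/key; have := H k; rewrite !ffunE kj (negbTE ki) addn0 //.
Qed.

Lemma count_even n m : 2 * m < n -> #|[set i : 'I_n | ~~ odd i && (i <= 2 * m)]| = m.+1.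
Proof.
elim: m => [|m IH] h.
- have h0 : 0 < n by lia.
  have -> : [set i : 'I_n | ~~ odd i && (i <= 2 * 0)] = [set Ordinal h0].
    apply/setP => i; rewrite !inE.
    apply/andP/eqP => [[_ i0]|->] //; apply: val_inj => /=; lia.
  by rewrite cards1.
- have h2 : 2 * m.+1 < n by lia.
  have -> : [set i : 'I_n | ~~ odd i && (i <= 2 * m.+1)] =
            Ordinal h2 |: [set i : 'I_n | ~~ odd i && (i <= 2 * m)].
    apply/setP => i; rewrite in_setU1 !inE.
    apply/andP/orP => [[oi le]|[/eqP->|/andP[oi le]]].
    + case: (ltnP (2 * m) i) => lt; last by right; rewrite oi.
      left; apply/eqP; apply: val_inj => /=.
      have : i != (2 * m).+1 :> nat by apply: contraNneq oi => ->; rewrite /= mul2n odd_double.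
      lia.
    + split; last by []. change (~~ odd (2 * m.+1)); by rewrite mul2n odd_double.
    + split => //; lia.
  rewrite cardsU1 IH; last by lia.
  have -> : Ordinal h2 \notin [set i : 'I_n | ~~ odd i && (i <= 2 * m)].
    rewrite inE negb_and; apply/orP; right; change (~~ (2 * m.+1 <= 2 * m)); lia.
  by [].
Qed.

Lemma count_even_sub n m (M : {set 'I_n}) : 2 * m < n ->
  (forall i : 'I_n, ~~ odd i -> i <= 2 * m -> i \in M) -> m.+1 <= #|M|.
Proof.
move=> h H; rewrite -(count_even h); apply: subset_leq_card; apply/subsetP => i.
by rewrite inE => /andP[]; apply: H.
Qed.

Lemma card_swap n (M : {set 'I_n}) a b : a \in M -> b \notin M -> #|b |: (M :\ a)| = #|M|.
Proof.
move=> aM bM; rewrite cardsU1 in_setD1 (negbTE bM) andbF /=.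
by rewrite [in RHS](cardsD1 a M) aM.
Qed.

Lemma even_or_odd v : exists j, v = 2 * j \/ v = 2 * j + 1.
Proof.
exists v./2; have := odd_double_half v; rewrite -mul2n.
case: (odd v) => /= E; [right|left]; lia.
Qed.

Lemma count_even_sub' n m (M : {set 'I_n}) : 2 * m < n ->
  (forall (i : 'I_n) j, nat_of_ord i = 2 * j -> j <= m -> i \in M) -> m.+1 <= #|M|.
Proof.
move=> h H; apply: count_even_sub => // i oi le.
have := odd_double_half i; rewrite (negbTE oi) add0n -mul2n => E.
apply: (H i i./2); lia.
Qed.

Lemma ordS_last n (i : 'I_n) : nat_of_ord i = n.-1 -> nat_of_ord (ordS i) = 0.
Proof. move=> E; rewrite val_ordS E; have := ltn_ord i; case: eqP => //; lia. Qed.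

Lemma ordS_lt n (i : 'I_n) : (nat_of_ord i).+1 < n -> nat_of_ord (ordS i) = (nat_of_ord i).+1.
Proof. move=> h; rewrite val_ordS; case: eqP => //; lia. Qed.

Lemma edge_shift n (i v : 'I_n) : v \in edge (ordS i) -> ord_pred v \in edge i.
Proof. rewrite !in_edge => /orP[/eqP->|/eqP->]; rewrite ordSK eqxx ?orbT //. Qed.

Lemma edge_self n (i : 'I_n) : i \in edge i.
Proof. by rewrite in_edge eqxx. Qed.

Lemma edge_succ n (i : 'I_n) : ordS i \in edge i.
Proof. by rewrite in_edge eqxx orbT. Qed.

Lemma ord_eq n (a b : 'I_n) : nat_of_ord a = nat_of_ord b -> a = b.
Proof. exact: val_inj. Qed.

Lemma no_le m : 2 * m + 2 <= 2 * m + 1 -> False.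
Proof. lia. Qed.

Lemma wrap_case n p (Mi Mj : {set 'I_n}) (i0 iL : 'I_n) :
  3 <= n -> is_matching Mi -> is_matching Mj -> #|Mj| = p -> 2 * p < n ->
  i0 \in Mj -> nat_of_ord i0 = 0 -> iL \in Mi -> nat_of_ord iL = n.-1 ->
  (forall a, a \in Mi -> (a \in Mj) || (ordS a \in Mj)) ->
  exists Mr k, [/\ is_matching Mr, #|Mr| = #|Mi|,
     (forall v, v \in cover Mr -> (v \in cover Mi) || (v == k)),
     k \in cover Mr & [/\ k \in cover Mj, k \notin cover Mi & lex_lt (eseq Mr) (eseq Mi)]].
Proof.
move=> n3 mi mj szj np j0 v0 iLM vL surj.
have n2 : 2 <= n by lia.
have L0 : nat_of_ord (ordS iL) = 0 by apply: ordS_last.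
pose Inv m := [/\ 2 * m + 2 < n,
   (forall (i : 'I_n) j, nat_of_ord i = 2 * j + 1 -> j < m -> i \in Mi) &
   (forall (i : 'I_n) j, nat_of_ord i = 2 * j -> j <= m -> i \in Mj)].
have Fa : forall m, Inv m -> forall i, i \in Mi -> nat_of_ord i <> 2 * m.
  move=> m [h Hi Hj] i iM; case: m h Hi Hj => [|m] h Hi Hj ie.
  - apply: (no_adj n2 mi iLM); have -> : ordS iL = i by apply: ord_eq; rewrite L0 /=; lia.
    exact: iM.
  - have h1 : 2 * m + 1 < n by lia.
    have wM : Ordinal h1 \in Mi by apply: (Hi _ m) => //.
    apply: (no_adj n2 mi wM); have -> : ordS (Ordinal h1) = i; last exact: iM.
    apply: ord_eq; rewrite ordS_lt /=; lia.
have Fc : forall m, Inv m -> forall v : 'I_n, nat_of_ord v <= 2 * m -> v \in cover Mi.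
  move=> m [h Hi Hj] v vle; have [j [E|E]] := even_or_odd v.
  - case: j E => [|j] E.
    + have -> : v = ordS iL by apply: ord_eq; rewrite L0 /=; lia.
      exact: edge_cover iLM (edge_succ _).
    + have h1 : 2 * j + 1 < n by lia.
      have wM : Ordinal h1 \in Mi by apply: (Hi _ j) => //=; lia.
      have -> : v = ordS (Ordinal h1) by apply: ord_eq; rewrite ordS_lt /=; lia.
      exact: edge_cover wM (edge_succ _).
  - have vM : v \in Mi by apply: (Hi _ j) => //; lia.
    exact: edge_cover vM (edge_self _).
have step : forall m, Inv m -> (forall v : 'I_n, nat_of_ord v = 2 * m + 1 -> v \in cover Mi) ->
    Inv m.+1.
  move=> m I; have I' := I; case: I' => [h Hi Hj] Hv.
  have h1 : 2 * m + 1 < n by lia.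
  pose v := Ordinal h1.
  have vM : v \in Mi.
    have /in_cover[i iM vi] := Hv v erefl.
    case: (val_edge vi) => [E|[[_ E]|[_ E]]].
    + by have -> : v = i by apply: ord_eq.
    + by exfalso; apply: (Fa m I i iM); rewrite /= in E; lia.
    + by rewrite /= in E; lia.
  have h0 : 2 * m < n by lia.
  have Sv : ordS v \in Mj.
    case/orP: (surj v vM) => // vj.
    have wj : Ordinal h0 \in Mj by apply: (Hj _ m).
    exfalso; apply: (no_adj n2 mj wj); have -> : ordS (Ordinal h0) = v; last exact: vj.
    by apply: ord_eq; rewrite ordS_lt /=; lia.
  have Hj' : forall (i : 'I_n) j, nat_of_ord i = 2 * j -> j <= m.+1 -> i \in Mj.
    move=> i j E jle; case: (ltnP j m.+1) => jm; first exact: (Hj i j).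
    have -> : i = ordS v; last exact: Sv.
    by apply: ord_eq; rewrite ordS_lt /=; lia.
  have cnt := count_even_sub' (m := m.+1) (M := Mj) (ltac:(lia)) Hj'.
  split; first lia.
  - move=> i j E jle; case: (ltnP j m) => jm; first exact: (Hi i j).
    by have -> : i = v by apply: ord_eq => /=; lia.
  - exact: Hj'.
have term : forall d m, n - 2 * m <= d -> Inv m -> exists m', Inv m' /\
    (forall v : 'I_n, nat_of_ord v = 2 * m' + 1 -> v \notin cover Mi).
  elim=> [|d IH] m dm I; first by case: I => h _ _; lia.
  have I' := I; case: I' => [h _ _]; have h1 : 2 * m + 1 < n by lia.
  case: (boolP (Ordinal h1 \in cover Mi)) => kA.
  - apply: (IH m.+1); first lia.
    apply: step => // v E; by have -> : v = Ordinal h1 by apply: ord_eq.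
  - exists m; split => // v E; by have -> : v = Ordinal h1 by apply: ord_eq.
have I0 : Inv 0.
  split; first lia.
  - by move=> i j _ /=.
  - move=> i j E jle; have -> : i = i0; last exact: j0.
    by apply: ord_eq; rewrite v0 /=; lia.
have [m [I kA]] := term n 0 (leq_subr _ _) I0.
have I' := I; case: I' => [h Hi Hj].
have h1 : 2 * m + 1 < n by lia.
pose k := Ordinal h1.
have kA' : k \notin cover Mi by apply: kA.
have Fb : forall i, i \in Mi -> nat_of_ord i <> 2 * m + 1.
  move=> i iM E; have ik : i = k by apply: ord_eq.
  by move: kA'; rewrite -ik (edge_cover iM (edge_self i)).
pose sh (i : 'I_n) := (nat_of_ord i < 2 * m) || (i == iL).
pose phi (i : 'I_n) := if sh i then ordS i else i.
have Fd : forall i, i \in Mi -> ~~ sh i -> 2 * m + 2 <= i /\ nat_of_ord i + 2 <= n.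
  move=> i iM; rewrite /sh negb_or => /andP[lt ne].
  have := Fa m I i iM; have := Fb i iM; have := ltn_ord i.
  have : nat_of_ord i <> n.-1 by move=> E; move/eqP: ne; apply; apply: ord_eq => /=; lia.
  lia.
have G1 : forall i, i \in Mi -> sh i -> forall v, v \in edge (ordS i) -> nat_of_ord v <= 2 * m + 1.
  move=> i iM; rewrite /sh => /orP[lt|/eqP->] v /val_edge.
  - rewrite ordS_lt; last lia. lia.
  - rewrite L0; lia.
have G2 : forall i, i \in Mi -> ~~ sh i -> forall v, v \in edge i -> 2 * m + 2 <= v.
  move=> i iM si v /val_edge; have := Fd i iM si; lia.
have injphi : {in Mi &, injective phi}.
  move=> i j iM jM; rewrite /phi.
  case: (boolP (sh i)) => si; case: (boolP (sh j)) => sj //.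
  - exact: ordS_inj.
  - move=> E; exfalso; have := G1 i iM si _ (edge_self _); rewrite E => H1.
    exact: no_le (leq_trans (G2 j jM sj _ (edge_self _)) H1).
  - move=> E; exfalso; have := G2 i iM si _ (edge_self _); rewrite E => H1.
    exact: no_le (leq_trans H1 (G1 j jM sj _ (edge_self _))).
pose Mr := [set phi i | i in Mi].
exists Mr, k; split.
- apply: matching_of => x y v /imsetP[i iM ->] /imsetP[j jM ->]; rewrite /phi.
  case: (boolP (sh i)) => si; case: (boolP (sh j)) => sj.
  + move=> /edge_shift vi /edge_shift vj. by rewrite (matchingP mi iM jM vi vj).
  + move=> vi vj; exfalso; exact: no_le (leq_trans (G2 j jM sj _ vj) (G1 i iM si _ vi)).
  + move=> vi vj; exfalso; exact: no_le (leq_trans (G2 i iM si _ vi) (G1 j jM sj _ vj)).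
  + move=> vi vj. by rewrite (matchingP mi iM jM vi vj).
- exact: card_in_imset.
- move=> v /in_cover[x /imsetP[i iM ->]]; rewrite /phi; case: (boolP (sh i)) => si vi.
  + have := G1 i iM si _ vi => vle.
    case: (ltnP (nat_of_ord v) (2 * m + 1)) => vlt.
    * by rewrite (Fc m I v (ltac:(lia))).
    * apply/orP; right; apply/eqP; apply: ord_eq => /=; lia.
  + by rewrite (edge_cover iM vi).
- have [w [wM sw ew]] : exists w, [/\ w \in Mi, sh w & nat_of_ord (ordS w) = 2 * m].
    case E: m => [|m'].
    + exists iL; split => //; by rewrite /sh eqxx orbT.
    + have h2 : 2 * m' + 1 < n by lia.
      have wM : Ordinal h2 \in Mi by apply: (Hi _ m') => //; lia.
      exists (Ordinal h2); split => //.
      * rewrite /sh; apply/orP; left; rewrite E /=; lia.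
      * rewrite ordS_lt /=; lia.
  apply/in_cover; exists (ordS w).
  + apply/imsetP; exists w => //; by rewrite /phi sw.
  + rewrite in_edge; apply/orP; right; apply/eqP; apply: ord_eq.
    rewrite ordS_lt ew /=; lia.
- split => //.
  + have h0 : 2 * m < n by lia.
    have wj : Ordinal h0 \in Mj by apply: (Hj _ m).
    apply: (edge_cover wj); rewrite in_edge; apply/orP; right; apply/eqP; apply: ord_eq.
    rewrite ordS_lt /=; lia.
  + apply: (lex_of_first_ord (b := ordS iL)).
    * apply/imsetP; exists iL => //; by rewrite /phi /sh eqxx orbT.
    * by apply/negP => bM; apply: (no_adj n2 mi iLM bM).
    * by move=> c; rewrite L0.
    * by exists iL => //; rewrite L0 vL; lia.
Qed.

Lemma last_of n (x : 'I_n) : n <= (nat_of_ord x).+1 -> nat_of_ord x = n.-1.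
Proof. have := ltn_ord x; lia. Qed.

Theorem lemma3p4 (n q : nat) :
  3 <= n -> 2 <= q -> q.-1 <= n./2 ->
  forall mi mj : mon n,
    min_gens (matching_gens n q.-1) mi ->
    min_gens (matching_gens n q.-1) mj ->
    gen_lt n q.-1 mj mi ->
    msubset (colon (principal mj) mi) (colon (Iq n q) mi) \/
    exists mr : mon n,
      [/\ min_gens (matching_gens n q.-1) mr, gen_lt n q.-1 mr mi,
          (exists k : 'I_n, forall u, colon (principal mr) mi u <-> principal (mvar k) u) &
          msubset (colon (principal mj) mi) (colon (principal mr) mi)].
Proof.
move=> n3 q2 qn mi mj _ _ [Mj [Mi [[mjM szj mjE lexj] [miM szi miE lexi] lt]]].
subst mi mj.
have n2 : 2 <= n by lia.
have neq : cover Mj != cover Mi.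
  apply/eqP => E.
  have : lex_le (eseq Mi) (eseq Mj) by apply: lexi => //; apply/ffunP => v; rewrite !ffunE E.
  exact: lex_lt_le_false lt.
have np : 2 * q.-1 < n.
  have h2 : 2 * q.-1 <= n by have := odd_double_half n; rewrite -mul2n; lia.
  rewrite ltn_neqAle h2 andbT; apply/eqP => E; move/eqP: neq; apply.
  have fullc : forall M : {set 'I_n}, is_matching M -> #|M| = q.-1 -> cover M = setT.
    move=> M mM sM; apply/eqP; by rewrite eqEcard subsetT cardsT card_ord card_cover // sM E leqnn.
  by rewrite (fullc _ mjM szj) (fullc _ miM szi).
have szE : #|Mj| = #|Mi| by rewrite szj szi.
have Li : lexmin_rep n q.-1 (mono Mi) Mi by split.
case: (boolP [exists b, [&& b \in Mj, b \notin cover Mi & ordS b \notin cover Mi]]) =>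
  [/existsP[b /and3P[bj b1 b2]]|C1].
  by left; apply: (concl1 miM szi q2 bj b1 b2).
right.
have C1' : forall b, b \in Mj -> b \notin cover Mi -> ordS b \in cover Mi.
  move=> b bj b1; apply/negPn/negP => b2; move/existsP: C1; apply; exists b; by rewrite bj b1 b2.
case: (boolP [exists b, [&& b \in Mj, b \notin cover Mi, ordS b \in cover Mi &
   (nat_of_ord b).+1 < n]]) => [/existsP[b /and4P[bj b1 b2 bn]]|C2].
- have bM : b \notin Mi by apply: contra b1 => bM; exact: edge_cover bM (edge_self _).
  have sM : ordS b \in Mi.
    case/in_cover: b2 => i iM; rewrite in_edge => /orP[/eqP->//|/eqP E].
    by move: bM; rewrite (ordS_inj E) iM.
  pose Mr := b |: (Mi :\ ordS b).
  apply: (concl2 (Mj := Mj) (Mr := Mr) (k := b) n3 _ _ Li).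
  + apply: matching_add; first by apply: (matching_sub miM); exact: subD1set.
    move=> v vb; apply/negP => /in_cover[i]; rewrite in_setD1 => /andP[ne iM] vi.
    move: vb; rewrite in_edge => /orP[/eqP E|/eqP E]; subst v.
    * by move: b1; rewrite (edge_cover iM vi).
    * by move: ne; rewrite (matchingP miM iM sM vi (edge_self _)) eqxx.
  + by rewrite /Mr (card_swap sM bM) szi.
  + move=> v /in_cover[x]; rewrite in_setU1 => /orP[/eqP->|].
    * rewrite in_edge => /orP[->|/eqP->]; first by rewrite orbT.
      by rewrite b2.
    * by rewrite in_setD1 => /andP[_ xM] vx; rewrite (edge_cover xM vx).
  + by apply: (edge_cover (i := b)); rewrite ?in_setU1 ?eqxx ?edge_self.
  + exact: (edge_cover bj (edge_self _)).
  + exact: b1.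
  + apply: (lex_of_first_ord (b := b)).
    * by rewrite in_setU1 eqxx.
    * exact: bM.
    * move=> c cb; rewrite in_setU1 in_setD1.
      have -> : (c == b) = false by apply/eqP => E; move: cb; rewrite E ltnn.
      have -> : (c == ordS b) = false.
        by apply/eqP => E; move: cb; rewrite E ordS_lt // ltnNge leqnSn.
      by [].
    * by exists (ordS b) => //; rewrite ordS_lt.
- have C2' : forall b, b \in Mj -> b \notin cover Mi -> ~~ ((nat_of_ord b).+1 < n).
    move=> b bj b1; apply/negP => bn; move/existsP: C2; apply; exists b.
    by rewrite bj b1 (C1' b bj b1) bn.
  have [b [bj bi bc [a aM ba]]] := lex_first_ord szE lt.
  have bn : (nat_of_ord b).+1 < n by exact: leq_ltn_trans ba (ltn_ord a).
  have bA : b \in cover Mi.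
    by apply/negPn/negP => b1; move: (C2' b bj b1); rewrite bn.
  have [iL [iLM vL v0]] : exists iL, [/\ iL \in Mi, nat_of_ord iL = n.-1 & nat_of_ord b = 0].
    case/in_cover: bA => i iM bi'; case: (val_edge bi') => [E|[[h E]|[h E]]].
    + by move: bi; rewrite (ord_eq E) iM.
    + have ib : i < b by rewrite E.
      have ij : i \in Mj by rewrite bc.
      exfalso; apply: (no_adj n2 mjM ij); have -> : ordS i = b; last exact: bj.
      by apply: ord_eq; rewrite ordS_lt.
    + by exists i; split => //; apply: last_of; rewrite h.
  have allA : forall x, x \in Mj -> x \in cover Mi.
    move=> x xj; apply/negPn/negP => x1.
    have := C2' x xj x1; rewrite -leqNgt => xn.
    have sx : ordS x = b by apply: ord_eq; rewrite v0 ordS_last // last_of.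
    by apply: (no_adj n2 mjM xj); rewrite sx.
  pose g (x : 'I_n) := if x \in Mi then x else ord_pred x.
  have gM : forall x, x \in Mj -> g x \in Mi.
    move=> x xj; rewrite /g; case: ifP => // xM.
    case/in_cover: (allA x xj) => i iM; rewrite in_edge => /orP[/eqP E|/eqP->].
    * by move: xM; rewrite E iM.
    * by rewrite ordSK.
  have ginj : {in Mj &, injective g}.
    move=> x y xj yj; rewrite /g; case: ifP => xM; case: ifP => yM //.
    * move=> E; exfalso; apply: (no_adj n2 mjM xj); by rewrite E ord_predK.
    * move=> E; exfalso; apply: (no_adj n2 mjM yj); by rewrite -E ord_predK.
    * exact: ord_pred_inj.
  have gimg : [set g x | x in Mj] = Mi.
    apply/eqP; rewrite eqEcard card_in_imset // szE leqnn andbT.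
    by apply/subsetP => y /imsetP[x xj ->]; apply: gM.
  have surj : forall a, a \in Mi -> (a \in Mj) || (ordS a \in Mj).
    move=> a' aM'; move: aM'; rewrite -gimg => /imsetP[x xj ->]; rewrite /g.
    case: ifP => _; first by rewrite xj.
    by rewrite ord_predK xj orbT.
  have [Mr [k [mr sr sub kr [kj ki lt']]]] :=
    wrap_case n3 miM mjM szj np bj v0 iLM vL surj.
  apply: (concl2 (Mj := Mj) (Mr := Mr) (k := k) n3 mr _ Li sub kr kj ki lt').
  by rewrite sr szi.
Qed.
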